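(* Let $\Lambda:\mathbb{R}\to[0,1]$ be a right-continuous decreasing function, $n\in\mathbb N$, $\Theta$ a convex set, $f:\Theta\times\mathbb{R}^n\to\mathbb{R}$, $\mathbf L\in(L^\infty)^n$ such that $f(\boldsymbol\theta,\mathbf L)\in L^\infty$ for all $\boldsymbol\theta\in\Theta$, and $\ell\in\mathbb{R}$. Then for every $\boldsymbol\theta\in\Theta$, $\mathrm{ES}_\Lambda(f(\boldsymbol\theta,\mathbf L))\le\ell$ if and only if $\mathrm{ES}_{\Lambda(\ell)}(f(\boldsymbol\theta,\mathbf L))\le\ell$.
   Context: $(\Omega,\mathcal F,\mathbb P)$ is an atomless probability space, $L^\infty$ the essentially bounded random variables; ''decreasing'' is weak; $\wedge=\min$. For $\alpha\in[0,1]$: $\mathrm{VaR}_\alpha(X)=\inf\{x\in\mathbb{R}:\mathbb P(X\le x)\ge\alpha\}$; $\mathrm{ES}_\alpha(X)=\frac{1}{1-\alpha}\int_\alpha^1\mathrm{VaR}_\beta(X)\,\mathrm d\beta$ for $\alpha<1$, $\mathrm{ES}_1(X)=\mathrm{VaR}_1(X)$; for decreasing $\Lambda:\mathbb{R}\to[0,1]$, $\mathrm{ES}_\Lambda(X)=\sup_{x\in\mathbb{R}}\left(\mathrm{ES}_{\Lambda(x)}(X)\wedge x\right)$, $X\in L^\infty$. *)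

(* Defs.v *)
From HB Require Import structures.
From mathcomp Require Import all_boot all_order all_algebra.
From mathcomp Require Import all_classical all_reals all_analysis.
Set Implicit Arguments. Unset Strict Implicit. Unset Printing Implicit Defensive.
Import Order.TTheory GRing.Theory Num.Theory.
Import numFieldNormedType.Exports.
Local Open Scope classical_set_scope.
Local Open Scope ring_scope.
Local Open Scope ereal_scope.

Section Defs.
Context {R : realType}.

Definition atomless {d : measure_display} {T : measurableType d}
  (P : probability T R) : Prop :=
  forall A : set T, measurable A -> 0 < P A ->
    exists B : set T, [/\ measurable B, B `<=` A, 0 < P B & P B < P A].

Definition Linfty {d : measure_display} {T : measurableType d}
  (P : probability T R) (X : T -> R) : Prop :=
  measurable_fun setT X /\
  exists M : R, {ae P, forall w, (`|X w| <= M)%R}.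

(* VaR_alpha(X) = inf {x in R | P(X <= x) >= alpha}, as an extended real
   (it is -oo for alpha = 0). *)
Definition VaR {d : measure_display} {T : measurableType d}
  (P : probability T R) (alpha : R) (X : T -> R) : \bar R :=
  ereal_inf [set x%:E | x in [set x : R | alpha%:E <= P [set w | (X w <= x)%R]]].

Definition ES {d : measure_display} {T : measurableType d}
  (P : probability T R) (alpha : R) (X : T -> R) : \bar R :=
  if (alpha < 1)%R then
    ((1 - alpha)^-1)%:E *
      \int[lebesgue_measure]_(beta in `[alpha, 1%R]) VaR P beta X
  else VaR P 1 X.

Definition ES_Lambda {d : measure_display} {T : measurableType d}
  (P : probability T R) (Lambda : R -> R) (X : T -> R) : \bar R :=
  ereal_sup (range (fun x : R => mine (ES P (Lambda x) X) x%:E)).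

End Defs.

(* Main.v *)
Require Import Defs.
From HB Require Import structures.
From mathcomp Require Import all_boot all_order all_algebra.
From mathcomp Require Import all_classical all_reals all_analysis.
Import Order.TTheory GRing.Theory Num.Theory.
Import numFieldNormedType.Exports.
Local Open Scope classical_set_scope.
Local Open Scope ring_scope.
From mathcomp Require Import ring lra.
From mathcomp Require Import measurable_realfun.
Section Aux.
Context (R : realType) (d : measure_display) (T : measurableType d)
  (P : probability T R) (X : T -> R).
Hypothesis mX : measurable_fun setT X.
Context (M : R) (M0 : 0 <= M) (N : set T) (mN : measurable N) (PN0 : P N = 0%E)
  (HN : forall w, ~ N w -> `|X w| <= M).

Lemma mle (c : R) : measurable [set w | (X w <= c)%R].
Proof.
have := mX measurableT _ (measurable_itv `]-oo, c]); rewrite setTI.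
by congr measurable; apply/seteqP; split => w /=; rewrite in_itv /=.
Qed.

Lemma F1up (b : R) : b <= 1 -> (VaR P b X <= M%:E)%E.
Proof.
move=> b1; apply: ereal_inf_lbound; exists M => //=.
apply: (@le_trans _ _ 1%E); first by rewrite lee_fin.
have <- : P (~` N) = 1%E by rewrite probability_setC // PN0 sube0.
apply: le_measure; rewrite ?inE //; first exact: measurableC.
  exact: mle.
by move=> w /HN Hw /=; apply: le_trans (ler_norm _) Hw.
Qed.

Lemma sub_N (x : R) : x < -M -> [set w | (X w <= x)%R] `<=` N.
Proof.
move=> xM w /= Xw; apply: contrapT => /HN; rewrite ler_norml => /andP[H _].
lra.
Qed.

Lemma F1lo (b : R) : 0 < b -> ((-M)%:E <= VaR P b X)%E.
Proof.
move=> b0; apply/ereal_infP => _ [x Hx <-]; rewrite lee_fin leNgt; apply/negP => xM.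
have : (P [set w | (X w <= x)%R] <= P N)%E.
  by apply: le_measure; rewrite ?inE //; [exact: mle | exact: sub_N].
rewrite PN0 => H; have := le_trans Hx H; rewrite lee_fin leNgt b0 //.
Qed.

Lemma F2 (b b' : R) : b <= b' -> (VaR P b X <= VaR P b' X)%E.
Proof.
move=> bb; apply: le_ereal_inf => _ [x Hx <-]; exists x => //=.
by apply: le_trans Hx; rewrite lee_fin.
Qed.

Lemma F3 (b c : R) : (P [set w | (X w <= c)%R] < b%:E)%E -> (c%:E <= VaR P b X)%E.
Proof.
move=> Hc; apply/ereal_infP => _ [x Hx <-]; rewrite lee_fin leNgt; apply/negP => xc.
have : (P [set w | (X w <= x)%R] <= P [set w | (X w <= c)%R])%E.
  apply: le_measure; rewrite ?inE //; try exact: mle.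
  by move=> w /= Xw; apply: le_trans Xw (ltW xc).
by move=> H; have := le_lt_trans (le_trans Hx H) Hc; rewrite ltxx.
Qed.

Lemma F4 (c : R) : (c%:E < VaR P 1 X)%E -> (P [set w | (X w <= c)%R] < 1%E)%E.
Proof.
move=> Hc; rewrite ltNge; apply/negP => H.
have : (VaR P 1 X <= c%:E)%E by apply: ereal_inf_lbound; exists c.
by rewrite leNgt Hc.
Qed.

Definition w (b : R) : R := if b <= 0 then -M else if 1 < b then M else fine (VaR P b X).

Lemma wE (b : R) : 0 < b -> b <= 1 -> VaR P b X = (w b)%:E.
Proof.
move=> b0 b1; rewrite /w leNgt b0 /= ltNge b1 /= fineK //.
by rewrite fin_numElt (lt_le_trans _ (F1lo _ b0)) ?ltNyr // (le_lt_trans (F1up _ b1)) ?ltry.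
Qed.

Lemma w_bd (b : R) : -M <= w b <= M.
Proof.
have M0p := M0.
rewrite /w; case: ifPn => b0.
  by apply/andP; split; lra.
case: ifPn => b1; first by apply/andP; split; lra.
have b0' : 0 < b by rewrite ltNge.
have b1' : b <= 1 by rewrite leNgt.
have := F1lo _ b0'; have := F1up _ b1'; rewrite (wE _ b0' b1') !lee_fin => -> -> //.
Qed.

Lemma w_nd : {homo w : x y / x <= y}.
Proof.
move=> x y xy; case: (ltP 0 x) => x0.
  case: (leP y 1) => y1.
    have x1 : x <= 1 by apply: le_trans xy y1.
    have y0 : 0 < y by apply: lt_le_trans xy.
    by rewrite -lee_fin -wE // -wE //; exact: F2.
  by rewrite /w (leNgt y) (lt_le_trans x0 xy) /= y1; case/andP: (w_bd x).
rewrite /w x0; by case/andP: (w_bd y).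
Qed.


Local Notation mu := (@lebesgue_measure R).

Lemma mw (D : set R) : measurable D -> measurable_fun D w.
Proof. by move=> mD; apply: measurable_realfun.nondecreasing_measurable => //; exact: w_nd. Qed.

Lemma bw (D : set R) : [bounded w x | x in D].
Proof.
exists M; split; first by rewrite num_real.
move=> r Mr x _ /=; rewrite ler_norml; have := w_bd x; move=> /andP[h1 h2].
have Mr' := Mr; apply/andP; split; lra.
Qed.

Lemma iw (D : set R) : measurable D -> (mu D < +oo)%E -> mu.-integrable D (EFin \o w).
Proof. by move=> mD fD; apply: measurable_bounded_integrable => //; [exact: mw | exact: bw]. Qed.

Lemma ic (D : set R) (c : R) : measurable D -> (mu D < +oo)%E -> mu.-integrable D (EFin \o (fun _ => c)).
Proof. by move=> mD fD; apply: measurable_bounded_integrable => //; first exact: bounded_cst. Qed.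

Lemma fin_itv (x y : bool) (a b : R) : (mu [set` Interval (BSide x a) (BSide y b)] < +oo)%E.
Proof. by rewrite lebesgue_measure_itv; case: ifP => _ //=; rewrite -EFinB ltry. Qed.

Lemma len_itv (x y : bool) (a b : R) : a <= b -> fine (mu [set` Interval (BSide x a) (BSide y b)]) = b - a.
Proof.
move=> ab; rewrite lebesgue_measure_itv /=; case: ifPn => [_|]; first by rewrite -EFinB.
rewrite lte_fin -leNgt => ba; have -> : a = b by apply/le_anti; rewrite ab ba.
by rewrite subrr.
Qed.

Lemma Rint_ub (D : set R) (c : R) : measurable D -> (mu D < +oo)%E ->
  (forall x, D x -> w x <= c) -> Rintegral mu D w <= c * fine (mu D).
Proof.
move=> mD fD H; rewrite -Rintegral_cst //; apply: le_Rintegral => //.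
  exact: iw. exact: ic.
Qed.

Lemma Rint_lb (D : set R) (c : R) : measurable D -> (mu D < +oo)%E ->
  (forall x, D x -> c <= w x) -> c * fine (mu D) <= Rintegral mu D w.
Proof.
move=> mD fD H; rewrite -Rintegral_cst //; apply: le_Rintegral => //.
  exact: ic. exact: iw.
Qed.

Definition Jr (a : R) := Rintegral mu `[a, 1]%classic w.

Lemma Jr_split (a b : R) : a <= b -> b <= 1 ->
  Jr a = Rintegral mu `[a, b[%classic w + Jr b.
Proof.
move=> ab b1; rewrite /Jr.
have E : `[a, 1]%classic = `[a, b[%classic `|` `[b, 1]%classic :> set R.
  by apply: itv_bndbnd_setU; rewrite bnd_simp.
have i1 := @iw _ (measurable_itv `[a, 1]) (fin_itv _ _ a 1).
rewrite E in i1 *; rewrite Rintegral_setU //.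
apply/disj_setPS => x [] /=; rewrite !in_itv /= => /andP[_ xb] /andP[bx _].
by have := lt_le_trans xb bx; rewrite ltxx.
Qed.

Lemma ES_lt1 (a : R) : 0 <= a -> a < 1 -> ES P a X = ((1 - a)^-1 * Jr a)%:E.
Proof.
move=> a0 a1; rewrite /ES a1 EFinM; congr (_ * _)%E.
have eqV : {in `]a, 1]%classic, (EFin \o w) =1 (fun b => VaR P b X)}.
  move=> x /set_mem /=; rewrite in_itv /= => /andP[ax x1].
  by rewrite wE //; exact: le_lt_trans a0 ax.
rewrite -integral_itv_obnd_cbnd; last first.
  move=> _ B mB.
  have mw' : measurable_fun `]a, 1]%classic (fun x : R => (w x)%:E).
    by apply/measurable_realfun.measurable_EFinP; exact: mw.
  have := mw' (measurable_itv _) B mB.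
  congr measurable; apply/seteqP; split => x [xD xB]; split => //.
    by rewrite /preimage /= -eqV //; exact: mem_set.
  by move: xB; rewrite /preimage /= -eqV //; exact: mem_set.
rewrite (_ : (\int[mu]_(x in `]a, 1%R]%classic) VaR P x X = \int[mu]_(x in `]a, 1%R]%classic) (w x)%:E)%E); last first.
  by apply: eq_integral => x xD; rewrite -eqV.
rewrite integral_itv_obnd_cbnd; last first.
  apply/measurable_realfun.measurable_EFinP; exact: mw.
rewrite /Jr /Rintegral fineK //; apply: integrable_fin_num => //.
exact: (@iw _ (measurable_itv _) (fin_itv _ _ _ _)).
Qed.

Lemma ES_1 : ES P 1 X = (w 1)%:E.
Proof. by rewrite /ES ltxx wE. Qed.


Lemma ES_mono (A B : R) : 0 <= A -> A <= B -> B <= 1 -> (ES P A X <= ES P B X)%E.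
Proof.
move=> A0 AB B1.
case: (ltP B 1) => [B1'|B1'].
  have A1 : A < 1 by apply: le_lt_trans AB B1'.
  rewrite ES_lt1 // ES_lt1 ?(le_trans A0 AB) // lee_fin.
  have hs := Jr_split _ _ AB (ltW B1').
  have h1 : Rintegral mu `[A, B[%classic w <= w B * (B - A).
    rewrite -(len_itv true true _ _ AB); apply: Rint_ub => //; first exact: fin_itv.
    by move=> x /=; rewrite in_itv /= => /andP[_ xB]; apply: w_nd; exact: ltW.
  have h2 : w B * (1 - B) <= Jr B.
    rewrite -(len_itv true false _ _ (ltW B1')); apply: Rint_lb => //; first exact: fin_itv.
    by move=> x /=; rewrite in_itv /= => /andP[Bx _]; apply: w_nd.
  have key : (1 - B) * Jr A <= (1 - A) * Jr B.
    rewrite hs; have h3 : 0 <= 1 - B by lra.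
    have h4 : 0 <= B - A by lra.
    nra.
  have eA : (1 - A)^-1 * Jr A = ((1 - B) * Jr A) / ((1 - A) * (1 - B)).
    by field; apply/andP; split; apply/eqP; lra.
  have eB : (1 - B)^-1 * Jr B = ((1 - A) * Jr B) / ((1 - A) * (1 - B)).
    by field; apply/andP; split; apply/eqP; lra.
  rewrite eA eB; apply: ler_wpM2r => //.
  by rewrite invr_ge0 mulr_ge0 // subr_ge0 ltW.
have -> : B = 1 by apply/le_anti; rewrite B1 B1'.
rewrite ES_1; case: (ltP A 1) => [A1|A1].
  rewrite ES_lt1 // lee_fin ler_pdivrMl ?subr_gt0 // mulrC.
  rewrite -(len_itv true false _ _ (ltW A1)); apply: Rint_ub => //; first exact: fin_itv.
  by move=> x /=; rewrite in_itv /= => /andP[_ x1]; apply: w_nd.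
have -> : A = 1 by apply/le_anti; rewrite A1 (le_trans AB B1).
by rewrite ES_1.
Qed.

Lemma near_lt1 (a0 l : R) : 0 <= a0 -> a0 < 1 -> (l%:E < ES P a0 X)%E ->
  exists2 del : R, 0 < del & forall a, 0 <= a -> a <= a0 -> a0 - a < del -> (l%:E < ES P a X)%E.
Proof.
move=> a00 a01; rewrite ES_lt1 // lte_fin ltr_pdivlMl ?subr_gt0 // => H.
have M0p := M0.
have Dp : 0 < M + `|l| + 1 by have := normr_ge0 l; lra.
exists ((Jr a0 - (1 - a0) * l) / (M + `|l| + 1)); first by apply: divr_gt0; lra.
move=> a a0' aa0 hdel.
have a1 : a < 1 by apply: le_lt_trans aa0 a01.
rewrite ES_lt1 // lte_fin ltr_pdivlMl ?subr_gt0 //.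
rewrite (Jr_split _ _ aa0 (ltW a01)).
have h1 : -M * (a0 - a) <= Rintegral mu `[a, a0[%classic w.
  rewrite -(len_itv true true _ _ aa0); apply: Rint_lb => //; first exact: fin_itv.
  by move=> x _; case/andP: (w_bd x).
move: hdel; rewrite ltr_pdivlMr // => hdel.
have hl : l <= `|l| by apply: ler_norm.
have h4 : 0 <= a0 - a by lra.
nra.
Qed.

Lemma near_1 (l : R) : (l%:E < ES P 1 X)%E ->
  exists2 p : R, p < 1 & forall a, p < a -> a <= 1 -> (l%:E < ES P a X)%E.
Proof.
rewrite ES_1 lte_fin => H.
pose c := (l + w 1) / 2.
have lc : l < c by rewrite /c; lra.
have cw : c < w 1 by rewrite /c; lra.
have Hp : (P [set w | (X w <= c)%R] < 1%E)%E by apply: F4; rewrite wE // lte_fin.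
have pfin : P [set w | (X w <= c)%R] = (fine (P [set w | (X w <= c)%R]))%:E.
  by rewrite fineK // ge0_fin_numE // (lt_trans Hp) // ltry.
have p0 : 0 <= fine (P [set w | (X w <= c)%R]) by rewrite fine_ge0.
exists (fine (P [set w | (X w <= c)%R])); first by rewrite -lte_fin -pfin.
move=> a pa a1.
have hw : forall b, a <= b -> b <= 1 -> c <= w b.
  move=> b ab b1; have b0 : 0 < b by lra.
  rewrite -lee_fin -wE //; apply: F3; rewrite pfin lte_fin; lra.
case: (ltP a 1) => [a1'|a1'].
  have a0 : 0 <= a by lra.
  rewrite ES_lt1 // lte_fin ltr_pdivlMl ?subr_gt0 //.
  have : c * (1 - a) <= Jr a.
    rewrite -(len_itv true false _ _ (ltW a1')); apply: Rint_lb => //; first exact: fin_itv.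
    by move=> x /=; rewrite in_itv /= => /andP[ax x1]; apply: hw.
  have : 0 < 1 - a by lra.
  nra.
have -> : a = 1 by apply/le_anti; rewrite a1 a1'.
by rewrite ES_1 lte_fin.
Qed.

End Aux.
Theorem proposition4 (R : realType) (d : measure_display) (T : measurableType d)
  (P : probability T R) (Patomless : atomless P)
  (Lambda : R -> R)
  (Lambda01 : forall x, 0 <= Lambda x <= 1)
  (Lambda_decr : forall x y, x <= y -> Lambda y <= Lambda x)
  (Lambda_rc : forall x, Lambda @ at_right x --> Lambda x)
  (n : nat) (E : lmodType R) (Theta : set E) (Theta_convex : convex_set Theta)
  (f : E -> 'rV[R]_n -> R) (L : T -> 'rV[R]_n)
  (L_Linfty : forall i : 'I_n, Linfty P (fun w => L w 0 i))
  (fL_Linfty : forall theta, Theta theta -> Linfty P (fun w => f theta (L w)))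
  (l : R) :
  forall theta, Theta theta ->
    (ES_Lambda P Lambda (fun w => f theta (L w)) <= l%:E)%E <->
    (ES P (Lambda l) (fun w => f theta (L w)) <= l%:E)%E.
Proof.
move=> theta Ht.
have [mX [M0 HM]] := fL_Linfty theta Ht.
case: HM => N [mN PN0 sN].
set X := (fun w => f theta (L w)) in mX sN *.
have HN : forall w, ~ N w -> `|X w| <= `|M0|.
  move=> w Nw; apply: (le_trans _ (ler_norm M0)); apply: contrapT => H.
  by apply: Nw; apply: sN; exact: H.
have Mp : 0 <= `|M0| by [].
have mono := ES_mono _ _ _ _ _ mX _ Mp _ mN PN0 HN.
split.
- move=> Hsup; rewrite leNgt; apply/negP => Hlt.
  have key : exists x, l < x /\ (l%:E < ES P (Lambda x) X)%E.
    have L0 : 0 <= Lambda l by case/andP: (Lambda01 l).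
    case: (ltP (Lambda l) 1) => [a1|a1].
      have [del del0 Hd] := near_lt1 _ _ _ _ _ mX _ Mp _ mN PN0 HN _ _ L0 a1 Hlt.
      have Hn := (cvgrPdist_lt _ _).1 (Lambda_rc l) del del0.
      have : \forall x \near l^'+, l < x /\ `|Lambda l - Lambda x| < del.
        by near=> x; split; [near: x; exact: nbhs_right_gt | near: x; exact: Hn].
      move/filter_ex => [x [lx hx]]; exists x; split => //.
      apply: Hd.
      - by case/andP: (Lambda01 x).
      - by apply: Lambda_decr; exact: ltW.
      - by apply: le_lt_trans (ler_norm _) hx.
    have L1 : Lambda l = 1.
      by apply/le_anti; rewrite a1 andbT; case/andP: (Lambda01 l).
    rewrite L1 in Hlt.
    have [p p1 Hp] := near_1 _ _ _ _ _ mX _ Mp _ mN PN0 HN _ Hlt.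
    have p1' : 0 < 1 - p by rewrite subr_gt0.
    have Hn := (cvgrPdist_lt _ _).1 (Lambda_rc l) _ p1'.
    have : \forall x \near l^'+, l < x /\ `|Lambda l - Lambda x| < 1 - p.
      by near=> x; split; [near: x; exact: nbhs_right_gt | near: x; exact: Hn].
    move/filter_ex => [x [lx hx]]; exists x; split => //.
    apply: Hp; last by case/andP: (Lambda01 x).
    move: hx; rewrite L1 => hx; have := le_lt_trans (ler_norm _) hx; lra.
  case: key => x [lx Hx].
  have ub : (mine (ES P (Lambda x) X) x%:E <= ES_Lambda P Lambda X)%E.
    by apply: ereal_sup_ubound; exists x.
  have : (l%:E < mine (ES P (Lambda x) X) x%:E)%E by rewrite lt_min Hx lte_fin lx.
  move=> /lt_le_trans /(_ ub) /lt_le_trans /(_ Hsup); rewrite ltxx //.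
- move=> Hl; rewrite /ES_Lambda; apply: ge_ereal_sup => _ [x _ <-].
  case: (leP x l) => xl.
    by rewrite ge_min; apply/orP; right; rewrite lee_fin.
  rewrite ge_min; apply/orP; left; apply: le_trans Hl; apply: mono.
  - by case/andP: (Lambda01 x).
  - by apply: Lambda_decr; exact: ltW.
  - by case/andP: (Lambda01 l).
Unshelve. all: by end_near.
Qed.
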